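(* Let $D\subset\mathbb{C}^n$ be a bounded homogeneous domain with $0\in D$ and $\psi\in H(D)$. If $M_\psi$ is an isometry on $\mathcal{B}(D)$ (respectively $\mathcal{B}_{0^*}(D)$), then $M_{\psi^k}$ is an isometry on $\mathcal{B}(D)$ (respectively $\mathcal{B}_{0^*}(D)$) for all $k\in\mathbb{N}$; in particular $\|\psi^k\|_{\mathcal{B}}=1$ for all $k\in\mathbb{N}$.
   Context: A domain $D\subset\mathbb{C}^n$ is homogeneous if its group of biholomorphic self-maps acts transitively on $D$. $H(D)$ denotes the holomorphic functions $D\to\mathbb{C}$. For $f\in H(D)$ and $z\in D$, $Q_f(z)=\sup_{u\in\mathbb{C}^n\setminus\{0\}}\frac{|\nabla f(z)u|}{H_z(u,\bar u)^{1/2}}$, where $\nabla f(z)u=\sum_{j=1}^n\frac{\partial f}{\partial z_j}(z)u_j$ and $H_z$ is the Bergman metric of $D$; $\beta_f=\sup_{z\in D}Q_f(z)$. The Bloch space $\mathcal{B}(D)$ is the set of $f\in H(D)$ with $\beta_f<\infty$, with norm $\|f\|_{\mathcal{B}}=|f(0)|+\beta_f$. The $*$-little Bloch space is $\mathcal{B}_{0^*}(D)=\{f\in\mathcal{B}(D):\lim_{z\to\partial^*D}Q_f(z)=0\}$ with the same norm, where $\partial^*D$ is the distinguished boundary of $D$. $M_\psi f=\psi f$. *)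

(* Defs.v *)
From HB Require Import structures.
From mathcomp Require Import all_boot all_order all_algebra.
From mathcomp Require Import all_classical all_reals all_analysis.
From mathcomp Require Import complex.
Set Implicit Arguments. Unset Strict Implicit. Unset Printing Implicit Defensive.
Import Order.TTheory GRing.Theory Num.Theory.
Import numFieldNormedType.Exports.
Local Open Scope classical_set_scope.
Local Open Scope ring_scope.

(* R[i] as a normed space over itself (its own modulus topology); then
   C^n = 'rV[R[i]]_n is a normed R[i]-module, so [differentiable] below is
   complex (Frechet) differentiability, i.e. holomorphy. *)
Section ComplexNormed.
Variable R : realType.
HB.instance Definition _ := PseudoPointedMetric.copy R[i] (R[i])^o.
HB.instance Definition _ := GRing.ComAlgebra.copy R[i] (R[i])^o.
HB.instance Definition _ := NormedModule.copy R[i] (R[i])^o.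
End ComplexNormed.

Section Bloch.
Variables (R : realType) (n : nat).
Local Notation C := (R[i]).
Local Notation Cn := ('rV[R[i]]_n).

Definition cabs (x : C) : R := ComplexField.Normc.normc x.

Definition holo_on (D : set Cn) (f : Cn -> C) : Prop :=
  forall z, D z -> differentiable f z.

Definition holo_map_on (D : set Cn) (phi : Cn -> Cn) : Prop :=
  forall z, D z -> differentiable phi z.

Definition is_domain (D : set Cn) : Prop := open D /\ connected D.

Definition bounded_domain_set (D : set Cn) : Prop :=
  exists M : R, forall z, D z -> forall j : 'I_n, cabs (z ord0 j) <= M.

Definition biholomorphic_self (D : set Cn) (phi : Cn -> Cn) : Prop :=
  holo_map_on D phi /\ phi @` D `<=` D /\
  exists psi : Cn -> Cn, holo_map_on D psi /\ psi @` D `<=` D /\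
    (forall z, D z -> psi (phi z) = z) /\ (forall z, D z -> phi (psi z) = z).

Definition homogeneous (D : set Cn) : Prop :=
  forall z w, D z -> D w -> exists phi, biholomorphic_self D phi /\ phi z = w.

Definition pt_of_coords (s : seq R) : Cn :=
  \row_(j < n) (Complex (nth 0 s (2 * j)) (nth 0 s (2 * j + 1))).

(* iterated Lebesgue integral over R^m of a nonnegative function
   (equal to the integral w.r.t. Lebesgue measure on R^m by Tonelli) *)
Fixpoint iter_integral (m : nat) (F : seq R -> \bar R) : \bar R :=
  match m with
  | 0 => F [::]
  | m'.+1 => (\int[@lebesgue_measure R]_x iter_integral m' (fun s => F (x :: s)))%E
  end.

Definition L2norm2 (D : set Cn) (f : Cn -> C) : \bar R :=
  iter_integral (2 * n)
    (fun s => ((cabs (f (pt_of_coords s)) ^+ 2) * \1_D (pt_of_coords s))%:E).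

Definition bergman_kernel_diag (D : set Cn) (z : Cn) : \bar R :=
  ereal_sup [set ((cabs (f z)) ^+ 2)%:E |
             f in [set f | holo_on D f /\ (L2norm2 D f <= 1)%E]].

Definition rderiv (v : Cn) (g : Cn -> R) : Cn -> R :=
  fun z => derive1 (fun t : R => g (z + (t%:C)%C *: v)) 0.

Definition ex (j : 'I_n) : Cn := delta_mx ord0 j.
Definition ey (j : 'I_n) : Cn := 'i%C *: delta_mx ord0 j.

(* Wirtinger mixed derivative d/dz_i d/dzbar_j g (z), for real-valued g:
   (1/4) (dx_i - i dy_i)(dx_j + i dy_j) g *)
Definition wirtinger_mixed (g : Cn -> R) (z : Cn) (i j : 'I_n) : C :=
  (Complex (rderiv (ex i) (rderiv (ex j) g) z + rderiv (ey i) (rderiv (ey j) g) z)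
           (rderiv (ex i) (rderiv (ey j) g) z - rderiv (ey i) (rderiv (ex j) g) z))
  / 4%:R.

Definition log_bergman (D : set Cn) : Cn -> R :=
  fun z => ln (fine (bergman_kernel_diag D z)).

Definition bergman_metric (D : set Cn) (z u : Cn) : C :=
  \sum_(i < n) \sum_(j < n)
     wirtinger_mixed (log_bergman D) z i j * u ord0 i * (u ord0 j)^*%C.

(* nabla f(z) u = sum_j df/dz_j (z) u_j is the complex differential 'd f z u *)
Definition Qf (D : set Cn) (f : Cn -> C) (z : Cn) : \bar R :=
  ereal_sup [set (cabs ('d f z u) / Num.sqrt (complex.Re (bergman_metric D z u)))%:E
            | u in [set u : Cn | u != 0]].

Definition beta (D : set Cn) (f : Cn -> C) : \bar R :=
  ereal_sup [set Qf D f z | z in D].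

Definition bloch (D : set Cn) (f : Cn -> C) : Prop :=
  holo_on D f /\ (beta D f < +oo)%E.

Definition bloch_norm (D : set Cn) (f : Cn -> C) : R :=
  cabs (f 0) + fine (beta D f).

Definition disc_algebra (D : set Cn) (f : Cn -> C) : Prop :=
  {within closure D, continuous f} /\ holo_on D f.

Definition is_closed_boundary (D : set Cn) (S : set Cn) : Prop :=
  closed S /\ S `<=` closure D /\
  forall f, disc_algebra D f -> forall z, closure D z ->
    ((cabs (f z))%:E <= ereal_sup [set (cabs (f x))%:E | x in S])%E.

Definition distinguished_boundary (D : set Cn) : set Cn :=
  \bigcap_(S in is_closed_boundary D) S.

Definition little_bloch_star (D : set Cn) (f : Cn -> C) : Prop :=
  bloch D f /\
  forall e : R, 0 < e -> exists U : set Cn,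
    open U /\ distinguished_boundary D `<=` U /\
    forall z, D z -> U z -> (Qf D f z < e%:E)%E.

Definition mult_op (psi f : Cn -> C) : Cn -> C := fun z => psi z * f z.

Definition mult_isometry_on (X : (Cn -> C) -> Prop) (D : set Cn) (psi : Cn -> C)
  : Prop :=
  forall f, X f -> X (mult_op psi f) /\ bloch_norm D (mult_op psi f) = bloch_norm D f.

Definition fpow (psi : Cn -> C) (k : nat) : Cn -> C := fun z => psi z ^+ k.

End Bloch.

(* Main.v *)
Require Import Defs.
From HB Require Import structures.
From mathcomp Require Import all_boot all_order all_algebra.
From mathcomp Require Import all_classical all_reals all_analysis.
From mathcomp Require Import complex.
Import Order.TTheory GRing.Theory Num.Theory.
Import numFieldNormedType.Exports.
Local Open Scope classical_set_scope.
Local Open Scope ring_scope.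

Section Aux.
Variables (R : realType) (n : nat).
Local Notation Cn := ('rV[R[i]]_n).

Definition one_f : Cn -> R[i] := cst 1.

Definition cQ : \bar R :=
  ereal_sup [set (0:R)%:E | _ in [set u : Cn | u != 0]].

Lemma d_one z u : cabs ('d one_f z u) = 0.
Proof. rewrite /one_f diff_cst; exact: ComplexField.Normc.normc0. Qed.

Lemma Qf_one (D : set Cn) z : Qf D one_f z = cQ.
Proof.
rewrite /Qf /cQ; congr ereal_sup.
apply/seteqP; split=> x [u uP <-].
  exists u; first exact: uP.
  by rewrite d_one mul0r.
exists u; first exact: uP.
by rewrite d_one mul0r.
Qed.

Lemma cQ_le0 : (cQ <= 0%:E)%E.
Proof. by apply: ub_ereal_sup => x [u _ <-]. Qed.

Lemma fine_cQ : fine cQ = 0.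
Proof.
have : [set (0:R)%:E | _ in [set u : Cn | u != 0]] `<=` [set 0%:E].
  by move=> x [u _ <-].
by move/subset_set1; rewrite /cQ => -[->|->]; rewrite ?ereal_sup0 ?ereal_sup1.
Qed.

Lemma beta_one (D : set Cn) : D 0 -> beta D one_f = cQ.
Proof.
move=> D0; rewrite /beta.
have -> : [set Qf D one_f z | z in D] = [set cQ].
  apply/seteqP; split=> x.
    by move=> [z _ <-]; rewrite Qf_one.
  by move=> ->; exists 0 => //; rewrite Qf_one.
by rewrite ereal_sup1.
Qed.

Lemma norm_one (D : set Cn) : D 0 -> bloch_norm D one_f = 1.
Proof.
move=> D0; rewrite /bloch_norm beta_one // fine_cQ addr0.
exact: ComplexField.Normc.normc1.
Qed.

Lemma bloch_one (D : set Cn) : D 0 -> bloch D one_f.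
Proof.
move=> D0; split.
  by move=> z _; exact: differentiable_cst.
rewrite beta_one //; apply: (le_lt_trans cQ_le0); exact: ltry.
Qed.

Lemma little_one (D : set Cn) : D 0 -> little_bloch_star D one_f.
Proof.
move=> D0; split; first exact: bloch_one.
move=> e e0; exists setT; split; first exact: openT; split; first by [].
move=> z _ _; rewrite Qf_one; apply: (le_lt_trans cQ_le0); by rewrite lte_fin.
Qed.

Lemma iso_pow (X : (Cn -> R[i]) -> Prop) (D : set Cn) psi :
  mult_isometry_on X D psi -> forall k, mult_isometry_on X D (fpow psi k).
Proof.
move=> H; elim=> [|k IH] f Xf.
  rewrite (_ : mult_op (fpow psi 0) f = f); first by split.
  by apply: funext => z; rewrite /mult_op /fpow expr0 mul1r.
rewrite (_ : mult_op (fpow psi k.+1) f = mult_op psi (mult_op (fpow psi k) f)).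
  have [X1 N1] := IH f Xf.
  have [X2 N2] := H _ X1.
  split; first exact: X2.
  exact: (etrans N2 N1).
by apply: funext => z; rewrite /mult_op /fpow exprS mulrA.
Qed.

Lemma pow_norm (X : (Cn -> R[i]) -> Prop) (D : set Cn) psi k :
  D 0 -> X one_f -> mult_isometry_on X D (fpow psi k) ->
  bloch_norm D (fpow psi k) = 1.
Proof.
move=> D0 X1 H.
have -> : fpow psi k = mult_op (fpow psi k) one_f.
  by apply: funext => z; rewrite /mult_op /one_f /= mulr1.
by rewrite (H _ X1).2 norm_one.
Qed.

End Aux.
Arguments iso_pow {R n X D psi}.
Arguments pow_norm {R n X D psi k}.
Arguments bloch_one {R n D}.
Arguments little_one {R n D}.

Theorem mainTheorem12 (R : realType) (n : nat) (D : set 'rV[R[i]]_n)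
    (psi : 'rV[R[i]]_n -> R[i]) :
  is_domain D -> bounded_domain_set D -> homogeneous D -> D 0 ->
  holo_on D psi ->
  (mult_isometry_on (bloch D) D psi ->
     forall k : nat, (0 < k)%N ->
       mult_isometry_on (bloch D) D (fpow psi k) /\ bloch_norm D (fpow psi k) = 1) /\
  (mult_isometry_on (little_bloch_star D) D psi ->
     forall k : nat, (0 < k)%N ->
       mult_isometry_on (little_bloch_star D) D (fpow psi k) /\
       bloch_norm D (fpow psi k) = 1).
Proof.
move=> _ _ _ D0 _; split=> H k _.
  split; first exact: (iso_pow H k).
  exact: (pow_norm D0 (bloch_one D0) (iso_pow H k)).
split; first exact: (iso_pow H k).
exact: (pow_norm D0 (little_one D0) (iso_pow H k)).
Qed.
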